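(* Let $p\ge 5$ be a prime with $p\equiv 5\pmod 6$, $K$ a field of characteristic $p$, and let $c_2(r)\in\mathbb F_p[r]$ be the coefficient of $x^{2p-1}y^{p-1}z^{p-2}$ in $(x^3z+y^4+ry^2z^2+z^4)^{p-1}$. Then $c_2(r)$ has a root $r\in\overline K$ with $r\neq 0,\pm 2$ if and only if $p\ge 17$. *)

(* Defs.v *)
From HB Require Import structures.
From mathcomp Require Import all_boot all_order all_algebra all_field.
Set Implicit Arguments. Unset Strict Implicit. Unset Printing Implicit Defensive.
Import GRing.Theory.
Local Open Scope ring_scope.

(* c2 R p : {poly R} (variable r) is the coefficient of x^(2p-1) y^(p-1) z^(p-2)
   in (x^3 z + y^4 + r y^2 z^2 + z^4)^(p-1), computed in the iterated polynomial
   ring R[r][z][y][x] (outermost variable x, then y, then z, coefficients in R[r]). *)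
Definition c2 (R : comNzRingType) (p : nat) : {poly R} :=
  let x : {poly {poly {poly {poly R}}}} := 'X in
  let y : {poly {poly {poly {poly R}}}} := ('X : {poly {poly {poly R}}})%:P in
  let z : {poly {poly {poly {poly R}}}} := (('X : {poly {poly R}})%:P)%:P in
  let r : {poly {poly {poly {poly R}}}} := ((('X : {poly R})%:P)%:P)%:P in
  let F := (x ^+ 3 * z + y ^+ 4 + r * y ^+ 2 * z ^+ 2 + z ^+ 4) ^+ p.-1 in
  ((F`_(2 * p - 1))`_p.-1)`_(p - 2).

(* Main.v *)
Require Import Defs.
From HB Require Import structures.
From mathcomp Require Import all_boot all_order all_algebra all_field.
From mathcomp Require Import ring lra zify.
Import GRing.Theory.
Local Open Scope ring_scope.

Lemma L3b (S : comNzRingType) (w : S) i t :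
  ((w%:P + 'X^2)^+i)`_(2*t) = w^+(i-t) *+ 'C(i,t).
Proof.
rewrite exprDn coef_sum.
have term : forall c : 'I_i.+1,
  ((w%:P)^+(i-c) * ('X^2)^+c *+ 'C(i,c))`_(2*t) = (w^+(i-c) *+ 'C(i,c)) * (2*t == 2*c)%N%:R.
  move=> c; by rewrite coefMn -rmorphXn -exprM coefCM coefXn mulrnAl.
under eq_bigr do rewrite term.
case: (leqP t i) => hti.
  rewrite (bigD1 (Ordinal (hti : (t < i.+1)%N))) //= big1 ?addr0 ?eqxx ?mulr1 //.
  move=> c /eqP hc; rewrite (_ : (2*t == 2*c)%N = false) ?mulr0 //.
  apply/negbTE/eqP => h; apply: hc; apply: val_inj => /=; lia.
rewrite bin_small // mulr0n big1 // => c _.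
rewrite (_ : (2*t == 2*c)%N = false) ?mulr0 //.
apply/negbTE/eqP => h; have := ltn_ord c; lia.
Qed.

Lemma L3 (S : comNzRingType) (Z Rr : S) m N : (m <= N)%N ->
  ((('X^4 + Rr%:P * 'X^2 * (Z%:P)^+2 + (Z%:P)^+4) ^+ m)`_(2*N))
  = \sum_(i < m.+1) (Z^+4)^+(m-i) * (Rr*Z^+2)^+(2*i-N) *+ ('C(m,i) * 'C(i,N-i)).
Proof.
move=> hmN.
have -> : ('X^4 + Rr%:P * 'X^2 * (Z%:P)^+2 + (Z%:P)^+4 : {poly S})
   = (Z^+4)%:P + 'X^2 * ((Rr*Z^+2)%:P + 'X^2).
  rewrite polyC_exp polyCM polyC_exp; ring.
rewrite exprDn coef_sum; apply: eq_bigr => i _.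
have hi : (i <= N)%N by have := ltn_ord i; lia.
rewrite coefMn -rmorphXn coefCM [(_ * _)^+ i]exprMn -[(polyX _ ^+ 2)^+ i]exprM coefXnM.
rewrite ltn_mul2l /= ltnNge hi /= -mulnBr L3b.
rewrite (_ : (i - (N - i) = 2 * i - N)%N); last by lia.
by rewrite mulrnAr -mulrnA [('C(i,_) * _)%N]mulnC.
Qed.

Lemma L4 (S : comNzRingType) (W Z : S) n a : (a <= n)%N ->
  ((W%:P + Z *: 'X^3)^+n)`_(3*a) = W^+(n-a) * Z^+a *+ 'C(n,a).
Proof.
move=> han.
rewrite exprDn coef_sum.
have term : forall c : 'I_n.+1,
  ((W%:P)^+(n-c) * (Z *: 'X^3)^+c *+ 'C(n,c))`_(3*a) = (W^+(n-c) * Z^+c *+ 'C(n,c)) * (3*a == 3*c)%N%:R.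
  move=> c; rewrite coefMn -rmorphXn exprZn -exprM coefCM coefZ coefXn.
  by rewrite mulrA mulrnAl.
under eq_bigr do rewrite term.
rewrite (bigD1 (Ordinal (han : (a < n.+1)%N))) //= big1 ?addr0 ?eqxx ?mulr1 //.
move=> c /eqP hc; rewrite (_ : (3*a == 3*c)%N = false) ?mulr0 //.
apply/negbTE/eqP => h; apply: hc; apply: val_inj => /=; lia.
Qed.
Lemma c2_formula (R : comNzRingType) k :
  c2 R (6*k+5) = \sum_(i < (2*k+1).+1)
    (('C(6*k+4, 4*k+3) * 'C(2*k+1, i) * 'C(i, 3*k+2-i))%:R) *: 'X^(2*i - (3*k+2)).
Proof.
rewrite /c2; cbv beta zeta.
set Z2 := ('X : {poly {poly R}}).
set Zc := (Z2%:P : {poly {poly {poly R}}}).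
set Rr := (('X : {poly R})%:P : {poly {poly R}}).
set W := ('X^4 + (Rr%:P) * 'X^2 * Zc^+2 + Zc^+4 : {poly {poly {poly R}}}).
rewrite (_ : _ + _ + _ + _ = W%:P + Zc *: 'X^3); last first.
  by rewrite /W -mul_polyC; ring.
rewrite (_ : (6 * k + 5).-1 = 6 * k + 4)%N; last by lia.
rewrite (_ : (2 * (6 * k + 5) - 1) = 3 * (4 * k + 3))%N; last by lia.
rewrite L4; last by lia.
rewrite (_ : (6 * k + 4 - (4 * k + 3)) = 2 * k + 1)%N; last by lia.
have E : (W ^+ (2 * k + 1))`_(6 * k + 4) = \sum_(i < (2*k+1).+1)
   (Z2^+4)^+(2*k+1-i) * (Rr*Z2^+2)^+(2*i-(3*k+2)) *+ ('C(2*k+1,i) * 'C(i,(3*k+2)-i)).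
  rewrite (_ : (6 * k + 4) = 2 * (3 * k + 2))%N; last by lia.
  by rewrite /W L3 //; lia.
rewrite coefMn /Zc -polyC_exp coefMC E.
rewrite (_ : (6 * k + 5 - 2) = 6 * k + 3)%N; last by lia.
rewrite coefMn mulr_suml coef_sum -sumrMnl; apply: eq_bigr => i _.
case: (ltnP (2 * i) (3 * k + 2)) => hi.
  rewrite (@bin_small i (3*k+2-i)); last by lia.
  by rewrite !muln0 mulr0n mul0r coef0 mul0rn scale0r.
rewrite mulrnAl !coefMn.
have -> : Z2^+4^+(2*k+1-i) * (Rr*Z2^+2)^+(2*i-(3*k+2)) * Z2^+(4*k+3)
   = (('X : {poly R})^+(2*i-(3*k+2)))%:P * Z2^+(6*k+3).
  rewrite polyC_exp -/Rr.
  rewrite [(Rr * _)^+ _]exprMn -[(Z2^+4)^+ _]exprM -[(Z2^+2)^+ _]exprM.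
  have -> : Z2^+(6*k+3) = Z2^+(4*(2*k+1-i)) * Z2^+(2*(2*i-(3*k+2))) * Z2^+(4*k+3).
    rewrite -!exprD; congr (_ ^+ _); have := ltn_ord i; lia.
  ring.
rewrite coefCM coefXn eqxx mulr1 scaler_nat -mulrnA.
congr (_ *+ _); lia.
Qed.

Lemma fact_ndvd p n : prime p -> (n < p)%N -> ~~ (p %| n`!)%N.
Proof.
move=> hp; elim: n => [|n IH] hn.
  by rewrite fact0 dvdn1; have := prime_gt1 hp; lia.
rewrite factS Euclid_dvdM // negb_or IH ?gtnNdvd //; lia.
Qed.

Lemma bin_ndvd p n t : prime p -> (n < p)%N -> (t <= n)%N -> ~~ (p %| 'C(n,t))%N.
Proof.
move=> hp hn ht; apply/negP => hd.
have E := bin_fact ht.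
have : (p %| n`!)%N by rewrite -E dvdn_mulr.
by apply/negP; apply: fact_ndvd.
Qed.

Lemma ndvd3 p a b c : prime p -> (0 < a < p)%N -> (0 < b < p)%N -> (0 < c < p)%N ->
  ~~ (p %| a * b * c)%N.
Proof.
move=> hp /andP[a0 ap] /andP[b0 bp] /andP[c0 cp].
by rewrite !Euclid_dvdM // !gtnNdvd.
Qed.

Definition Dc (K : nzSemiRingType) j e i : K :=
  ('C(6*(2*j+e)+4, 4*(2*j+e)+3) * 'C(2*(2*j+e)+1, i) * 'C(i, 3*(2*j+e)+2-i))%:R.

Definition hp (K : nzSemiRingType) j e : {poly K} :=
  \sum_(i < (2*(2*j+e)+1).+1) Dc K j e i *: 'X^(i - (3*j+1+2*e)).

Lemma Dc_zero (K : nzSemiRingType) j e i : (e <= 1)%N -> (i < 3*j+1+2*e)%N -> Dc K j e i = 0.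
Proof.
move=> he hi; rewrite /Dc (@bin_small i); last by lia.
by rewrite muln0.
Qed.

Lemma Dc_nz (K : nzSemiRingType) p j e i : prime p -> p = (12*j+5+6*e)%N -> (e <= 1)%N ->
  p \in [pchar K] -> (3*j+1+2*e <= i <= 2*(2*j+e)+1)%N -> Dc K j e i != 0.
Proof.
move=> pp hpv he hc /andP[h1 h2].
rewrite /Dc -(dvdn_pcharf hc) !Euclid_dvdM // !negb_or !bin_ndvd //; lia.
Qed.

Lemma c2_eval (K : comNzRingType) j e r : (e <= 1)%N ->
  (c2 K (12*j+5+6*e)).[r] = r^+e * (hp K j e).[r^+2].
Proof.
move=> he.
rewrite (_ : (12*j+5+6*e) = 6*(2*j+e)+5)%N; last by lia.
rewrite c2_formula /hp !horner_sum mulr_sumr; apply: eq_bigr => i _.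
rewrite !hornerZ !hornerXn.
case: (ltnP i (3*j+1+2*e)) => hi.
  rewrite (_ : (('C(6 * (2 * j + e) + 4, 4 * (2 * j + e) + 3) * 'C(2 * (2 * j + e) + 1, i) *
     'C(i, 3 * (2 * j + e) + 2 - i))%:R : K) = Dc K j e i) //.
  by rewrite Dc_zero // !mul0r mulr0.
rewrite -exprM -[Dc _ _ _ _ * _]mulrC mulrA -exprD.
rewrite /Dc mulrC; congr (_ * _); congr (_ ^+ _); lia.
Qed.

Lemma hp_coef (K : nzSemiRingType) j e t : (e <= 1)%N -> (t <= j)%N ->
  (hp K j e)`_t = Dc K j e (3*j+1+2*e+t).
Proof.
move=> he ht.
have hlt : (3*j+1+2*e+t < (2*(2*j+e)+1).+1)%N by lia.
rewrite /hp coef_sumMXn (bigD1 (Ordinal hlt)) /=; last by rewrite addKn eqxx.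
rewrite big1 ?addr0 // => i /andP[/eqP hi hne].
apply: Dc_zero => //.
have hne' : (nat_of_ord i != 3*j+1+2*e+t)%N.
  by apply: contra hne => /eqP h; apply/eqP; apply: val_inj.
move: hne'; lia.
Qed.

Lemma hp_coef_big (K : nzSemiRingType) j e t : (e <= 1)%N -> (j < t)%N ->
  (hp K j e)`_t = 0.
Proof.
move=> he ht.
rewrite /hp coef_sumMXn big1 // => i /andP[_ /eqP hi].
have := ltn_ord i; lia.
Qed.

Lemma key p j k : prime p -> (2*k+1 < p)%N -> (2 <= k)%N ->
  (p %| (2*k+1) * 'C(2*k, k+2) + 'C(2*k+1, k+1) * (4*j))%N ->
  (p %| k*(k-1) + 4*j*(k+2))%N.
Proof.
move=> pp hkp hk hd.
have [l hl] : exists l, k = (l+2)%N by exists (k-2)%N; lia.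
subst k.
have F1 := @bin_fact (2*(l+2)).+1 (l+3) ltac:(lia).
rewrite (_ : ((2*(l+2)).+1 - (l+3)) = l.+2)%N in F1; last by lia.
rewrite [(l.+2)`!]factS [(l.+1)`!]factS [((2*(l+2)).+1)`!]factS in F1.
have F2 := @bin_fact (2*(l+2)) (l+4) ltac:(lia).
rewrite (_ : (2*(l+2) - (l+4)) = l)%N in F2; last by lia.
rewrite (_ : (l+4)`! = (l+3).+1 * (l+3)`!)%N in F2; last first.
  by rewrite -factS; congr (_`!); lia.
rewrite (_ : (2*(l+2)+1) = (2*(l+2)).+1)%N in hd; last by lia.
rewrite (_ : (l+2+2) = l+4)%N in hd; last by lia.
rewrite (_ : (l+2+1) = l+3)%N in hd; last by lia.
rewrite (_ : ((l + 2) * (l + 2 - 1) + 4 * j * (l + 2 + 2)) = l.+2 * l.+1 + 4*j*(l+4))%N; last by nia.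
move: F1 F2 hd.
set c0 := 'C(_, l+3). set c1 := 'C(_, l+4). set A := (l+3)`!. set L := l`!.
set F := (2 * (l + 2))`!. set m1 := (2*(l+2)).+1.
move=> F1 F2 hd.
have E : ((m1 * c1 + c0 * (4*j)) * ((l+3).+1 * A * L)
   = c0 * A * L * (l.+2 * l.+1 + 4*j*(l+4)))%N.
  have -> : ((m1 * c1 + c0 * (4*j)) * ((l+3).+1 * A * L)
     = m1 * (c1 * ((l+3).+1 * A * L)) + c0 * (4*j) * ((l+3).+1 * A * L))%N by ring.
  rewrite F2 -F1 (_ : (l+3).+1 = l+4)%N; last by lia.
  ring.
have : (p %| c0 * A * L * (l.+2 * l.+1 + 4*j*(l+4)))%N.
  by rewrite -E; apply: dvdn_mulr.
have h0 : ~~ (p %| c0)%N by apply: bin_ndvd => //; lia.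
have hA : ~~ (p %| A)%N by apply: fact_ndvd => //; lia.
have hL : ~~ (p %| L)%N by apply: fact_ndvd => //; lia.
by rewrite !Euclid_dvdM // (negbTE h0) (negbTE hA) (negbTE hL).
Qed.

Lemma sum_all_eq (K : nzRingType) (x : K) (rs : seq K) :
  all (fun z => z == x) rs -> \sum_(z <- rs) z = x *+ size rs.
Proof.
elim: rs => [|y s IH] /=; first by rewrite big_nil.
by move/andP => [/eqP -> hs]; rewrite big_cons IH // mulrS.
Qed.

Lemma final_nat p j e : prime p -> p = (12*j+5+6*e)%N -> (e <= 1)%N -> (1 <= j)%N ->
  ~~ (p %| (2*j+e)*((2*j+e)-1) + 4*j*((2*j+e)+2))%N.
Proof.
move=> pp hpv he hj.
case: e he hpv => [|[|//]] _ hpv.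
  rewrite (_ : ((2*j+0)*((2*j+0)-1) + 4*j*((2*j+0)+2)) = 6 * j * (2*j+1))%N; last by nia.
  apply: ndvd3 => //; lia.
rewrite (_ : ((2*j+1)*((2*j+1)-1) + 4*j*((2*j+1)+2)) = 2 * j * (6*j+7))%N; last by nia.
apply: ndvd3 => //; lia.
Qed.

Lemma nat_step p j e : prime p -> p = (12*j+5+6*e)%N -> (e <= 1)%N -> (1 <= j)%N ->
  ~~ (p %| 'C(6*(2*j+e)+4, 4*(2*j+e)+3) * 'C(2*(2*j+e)+1, 3*j+1+2*e+(j-1))
            * 'C(3*j+1+2*e+(j-1), 3*(2*j+e)+2-(3*j+1+2*e+(j-1)))
         + 'C(6*(2*j+e)+4, 4*(2*j+e)+3) * 'C(2*(2*j+e)+1, 3*j+1+2*e+j)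
            * 'C(3*j+1+2*e+j, 3*(2*j+e)+2-(3*j+1+2*e+j)) * (4*j))%N.
Proof.
move=> pp hpv he hj.
have hB : ~~ (p %| 'C(6*(2*j+e)+4, 4*(2*j+e)+3))%N by apply: bin_ndvd => //; lia.
set k := (2*j+e)%N.
rewrite (_ : (3*j+1+2*e+(j-1)) = 2*k)%N; last by rewrite /k; lia.
rewrite (_ : (3*j+1+2*e+j) = 2*k+1)%N; last by rewrite /k; lia.
rewrite (_ : (3*k+2-2*k) = k+2)%N; last by lia.
rewrite (_ : (3*k+2-(2*k+1)) = k+1)%N; last by lia.
have Eb := @bin_sub (2*k+1) 1 ltac:(lia).
rewrite bin1 addnK in Eb.
rewrite binn Eb.
rewrite muln1 -!mulnA -mulnDr Euclid_dvdM // (negbTE hB) /=.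
apply/negP => hd.
have := @key p j k pp ltac:(lia) ltac:(lia).
move=> /(_ hd); apply/negP.
exact: final_nat pp hpv he hj.
Qed.

Lemma hp_size (K : nzSemiRingType) p j e : prime p -> p = (12*j+5+6*e)%N -> (e <= 1)%N ->
  p \in [pchar K] -> size (hp K j e) = j.+1.
Proof.
move=> pp hpv he hc; apply/eqP; rewrite eqn_leq; apply/andP; split.
  by apply/leq_sizeP => t ht; apply: hp_coef_big.
rewrite ltnNge; apply/negP => /leq_sizeP /(_ j (leqnn j)).
rewrite hp_coef // => /eqP; apply/negP; apply: (@Dc_nz _ _ _ _ _ pp hpv he hc); lia.
Qed.

Theorem proposition3p4 (p : nat) (K : closedFieldType) :
  prime p -> (5 <= p)%N -> (p %% 6 = 5)%N -> p \in [pchar K] ->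
  ((exists r : K, root (c2 K p) r /\ r != 0 /\ r != 2%:R /\ r != - 2%:R)
   <-> (17 <= p)%N).
Proof.
move=> pp hp5 hmod hc.
have [j [e [he hpv]]] : exists j e, (e <= 1)%N /\ p = (12*j+5+6*e)%N.
  exists (p %/ 12)%N, ((p %% 12 - 5) %/ 6)%N; lia.
have h0 : (hp K j e)`_0 != 0.
  rewrite hp_coef //; apply: (@Dc_nz _ _ _ _ _ pp hpv he hc); lia.
have hsz := @hp_size K p j e pp hpv he hc.
rewrite {1}hpv.
split.
  move=> [r [hr [r0 [r2 r2']]]].
  case: (ltnP 0 j) => hj; first by lia.
  exfalso.
  have hj0 : j = 0%N by lia.
  move: hr; rewrite /root c2_eval //.
  rewrite [hp K j e]size1_polyC; last by rewrite hsz hj0.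
  rewrite hornerC mulf_eq0 (negbTE h0) orbF expf_eq0 (negbTE r0) andbF.
  by [].
move=> h17.
have hj : (1 <= j)%N by lia.
set h := hp K j e in h0 hsz *.
have hlc : lead_coef h != 0.
  rewrite lead_coefE hsz /= /h hp_coef //; apply: (@Dc_nz _ _ _ _ _ pp hpv he hc); lia.
case: (closed_field_poly_normal h) => rs hrs.
have hsr : size rs = j.
  have := hsz; rewrite hrs size_scale // size_prod_XsubC; lia.
case: (boolP (all (fun z => z == 4%:R) rs)) => [hall | /allPn [z zin zn4]].
  exfalso.
  have E1 : h`_(j-1) = lead_coef h * - (4%:R *+ j).
    rewrite {1}hrs coefZ (_ : (j-1)%N = (size rs).-1); last by lia.
    rewrite coefPn_prod_XsubC; last by rewrite hsr; lia.
    by rewrite (@sum_all_eq _ _ _ hall) hsr.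
  move: E1; rewrite lead_coefE hsz /= /h !hp_coef //; try lia.
  move=> E2.
  have E3 : Dc K j e (3*j+1+2*e+(j-1)) + Dc K j e (3*j+1+2*e+j) * (4*j)%:R = 0.
    by rewrite E2 natrM mulr_natr mulrN addNr.
  have : (p %| 'C(6*(2*j+e)+4, 4*(2*j+e)+3) * 'C(2*(2*j+e)+1, 3*j+1+2*e+(j-1))
            * 'C(3*j+1+2*e+(j-1), 3*(2*j+e)+2-(3*j+1+2*e+(j-1)))
         + 'C(6*(2*j+e)+4, 4*(2*j+e)+3) * 'C(2*(2*j+e)+1, 3*j+1+2*e+j)
            * 'C(3*j+1+2*e+j, 3*(2*j+e)+2-(3*j+1+2*e+j)) * (4*j))%N.
    rewrite (dvdn_pcharf hc); apply/eqP; rewrite -E3 /Dc natrD !natrM //.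
  by apply/negP; apply: nat_step.
have hz : h.[z] = 0.
  rewrite hrs hornerZ.
  have := root_prod_XsubC rs z; rewrite zin => /rootP ->.
  by rewrite mulr0.
have z0 : z != 0.
  apply/eqP => ez; move: h0; rewrite -horner_coef0 -ez hz; by rewrite ez eqxx.
have [r hr] : exists r : K, root ('X^2 - z%:P) r.
  by apply/closed_rootP; rewrite size_XnsubC.
have rz : r ^+ 2 = z.
  by move: hr; rewrite /root !hornerE subr_eq0 => /eqP.
exists r; split.
  by rewrite /root c2_eval // rz hz mulr0.
split.
  apply/eqP => r0; move: z0; rewrite -rz r0 expr0n /=.
  by rewrite eqxx.
split.
  apply/eqP => r2; move: zn4; rewrite -rz r2 expr2 -natrM /=.
  by rewrite eqxx.
apply/eqP => r2; move: zn4; rewrite -rz r2 sqrrN expr2 -natrM /=.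
by rewrite eqxx.
Qed.
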